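(* Let $\mathcal{A}$ be an additive category with maximal exact structure $\mathcal{E}_{max}$, and let $\mathcal{W}_1,\mathcal{W}_2$ be weakly exact structures contained in $\mathcal{E}_{max}$. Define $\mathcal{W}_1+\mathcal{W}_2=\bigcup_{A,C}\{\eta_1+\eta_2\mid \eta_1\in\mathcal{W}_1(C,A),\ \eta_2\in\mathcal{W}_2(C,A)\}$, where $\mathcal{W}_k(C,A)$ is the class of sequences $A\to B\to C$ in $\mathcal{W}_k$ and $\eta_1+\eta_2=\nabla_A(\eta_1\oplus\eta_2)\Delta_C$ is the Baer sum (computed in $\mathcal{E}_{max}$, and closed under isomorphism). Then (a) $\mathcal{W}_1+\mathcal{W}_2$ is a weakly exact structure, and (b) it is the smallest weakly exact structure containing $\mathcal{W}_1$ and $\mathcal{W}_2$, i.e. it equals $\bigcap\{\mathcal{V}\ \text{weakly exact}\mid \mathcal{W}_1\subseteq\mathcal{V},\ \mathcal{W}_2\subseteq\mathcal{V}\}$, the join in the lattice of weakly exact structures contained in $\mathcal{E}_{max}$.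
   Context: Let $\mathcal{A}$ be an additive category. A kernel-cokernel pair is $A\xrightarrow{i}B\xrightarrow{d}C$ with $i$ a kernel of $d$ and $d$ a cokernel of $i$. A weakly exact structure on $\mathcal{A}$ is a class $\mathcal{W}$ of kernel-cokernel pairs, closed under isomorphisms of sequences and under finite direct sums of sequences, such that, calling $i$ an admissible monic (resp. $d$ an admissible epic) if $(i,d)\in\mathcal{W}$ for some $d$ (resp. some $i$): (E0) $1_A$ is an admissible monic for every $A$; (E0)$^{op}$ $1_A$ is an admissible epic for every $A$; (E2) pushouts of admissible monics along arbitrary morphisms exist and are admissible monics; (E2)$^{op}$ pullbacks of admissible epics along arbitrary morphisms exist and are admissible epics. An exact structure is such a class (closed under isomorphisms, satisfying (E0), (E0)$^{op}$, (E2), (E2)$^{op}$) in which admissible monics and admissible epics are closed under composition; $\mathcal{E}_{max}$ is the unique maximal exact structure on $\mathcal{A}$. $\nabla_A:A\oplus A\to A$ is the codiagonal, $\Delta_C:C\to C\oplus C$ the diagonal; $\nabla_A(\cdot)$ denotes pushout along $\nabla_A$ and $(\cdot)\Delta_C$ pullback along $\Delta_C$. *)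

(* Defs.v *)
From HB Require Import structures.
From mathcomp Require Import all_boot all_algebra.
Set Implicit Arguments. Unset Strict Implicit. Unset Printing Implicit Defensive.
Import GRing.Theory.
Local Open Scope ring_scope.

Record PreAdditive := {
  Ob :> Type;
  HomC : Ob -> Ob -> zmodType;
  idm : forall A : Ob, HomC A A;
  comp : forall {A B C : Ob}, HomC B C -> HomC A B -> HomC A C;
  comp_assoc : forall (A B C D : Ob) (h : HomC C D) (g : HomC B C) (f : HomC A B),
      comp h (comp g f) = comp (comp h g) f;
  comp_id_l : forall (A B : Ob) (f : HomC A B), comp (idm B) f = f;
  comp_id_r : forall (A B : Ob) (f : HomC A B), comp f (idm A) = f;
  comp_addl : forall (A B C : Ob) (g g' : HomC B C) (f : HomC A B),
      comp (g + g') f = comp g f + comp g' f;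
  comp_addr : forall (A B C : Ob) (g : HomC B C) (f f' : HomC A B),
      comp g (f + f') = comp g f + comp g f'
}.

Arguments HomC {p}.
Arguments idm {p}.
Arguments comp {p A B C}.

Section Defs.
Variable K : PreAdditive.

Definition is_biproduct (X Y S : K) (i1 : HomC X S) (i2 : HomC Y S)
    (p1 : HomC S X) (p2 : HomC S Y) : Prop :=
  [/\ comp p1 i1 = idm X, comp p2 i2 = idm Y, comp p1 i2 = 0, comp p2 i1 = 0
    & comp i1 p1 + comp i2 p2 = idm S].

Definition is_additive : Prop :=
  (exists Z : K, idm Z = 0) /\
  (forall X Y : K, exists (S : K) (i1 : HomC X S) (i2 : HomC Y S)
     (p1 : HomC S X) (p2 : HomC S Y), is_biproduct i1 i2 p1 p2).

Definition dsum (X Y S X' Y' T : K)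
    (i1 : HomC X S) (i2 : HomC Y S) (p1 : HomC S X) (p2 : HomC S Y)
    (j1 : HomC X' T) (j2 : HomC Y' T) (q1 : HomC T X') (q2 : HomC T Y')
    (f : HomC X X') (g : HomC Y Y') : HomC S T :=
  comp j1 (comp f p1) + comp j2 (comp g p2).

Definition is_iso (X Y : K) (f : HomC X Y) : Prop :=
  exists g : HomC Y X, comp g f = idm X /\ comp f g = idm Y.

Definition is_kernel (A B C : K) (i : HomC A B) (d : HomC B C) : Prop :=
  comp d i = 0 /\
  forall (X : K) (f : HomC X B), comp d f = 0 -> exists! g : HomC X A, comp i g = f.

Definition is_cokernel (A B C : K) (d : HomC B C) (i : HomC A B) : Prop :=
  comp d i = 0 /\
  forall (X : K) (f : HomC B X), comp f i = 0 -> exists! g : HomC C X, comp g d = f.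

Definition kc_pair (A B C : K) (i : HomC A B) (d : HomC B C) : Prop :=
  is_kernel i d /\ is_cokernel d i.

Definition seqclass := forall A B C : K, HomC A B -> HomC B C -> Prop.

Definition subclass (W V : seqclass) : Prop :=
  forall (A B C : K) (i : HomC A B) (d : HomC B C), W A B C i d -> V A B C i d.

Definition iso_seq (A B C A' B' C' : K) (i : HomC A B) (d : HomC B C)
    (i' : HomC A' B') (d' : HomC B' C') : Prop :=
  exists (a : HomC A A') (b : HomC B B') (c : HomC C C'),
    [/\ is_iso a, is_iso b, is_iso c, comp b i = comp i' a & comp c d = comp d' b].

Definition kc_class (W : seqclass) : Prop :=
  forall (A B C : K) (i : HomC A B) (d : HomC B C), W A B C i d -> kc_pair i d.

Definition iso_closed (W : seqclass) : Prop :=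
  forall (A B C A' B' C' : K) (i : HomC A B) (d : HomC B C)
    (i' : HomC A' B') (d' : HomC B' C'),
    W A B C i d -> iso_seq i d i' d' -> W A' B' C' i' d'.

Definition dsum_closed (W : seqclass) : Prop :=
  forall (A B C A' B' C' : K) (i : HomC A B) (d : HomC B C)
    (i' : HomC A' B') (d' : HomC B' C'),
    W A B C i d -> W A' B' C' i' d' ->
    forall (SA SB SC : K)
      (a1 : HomC A SA) (a2 : HomC A' SA) (a1' : HomC SA A) (a2' : HomC SA A')
      (b1 : HomC B SB) (b2 : HomC B' SB) (b1' : HomC SB B) (b2' : HomC SB B')
      (c1 : HomC C SC) (c2 : HomC C' SC) (c1' : HomC SC C) (c2' : HomC SC C'),
      is_biproduct a1 a2 a1' a2' -> is_biproduct b1 b2 b1' b2' ->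
      is_biproduct c1 c2 c1' c2' ->
      W SA SB SC (dsum a1 a2 a1' a2' b1 b2 b1' b2' i i')
                 (dsum b1 b2 b1' b2' c1 c2 c1' c2' d d').

Definition adm_mono (W : seqclass) (A B : K) (i : HomC A B) : Prop :=
  exists (C : K) (d : HomC B C), W A B C i d.

Definition adm_epi (W : seqclass) (B C : K) (d : HomC B C) : Prop :=
  exists (A : K) (i : HomC A B), W A B C i d.

Definition is_pushout (A B A' P : K) (i : HomC A B) (f : HomC A A')
    (i' : HomC A' P) (f' : HomC B P) : Prop :=
  comp f' i = comp i' f /\
  forall (X : K) (u : HomC B X) (v : HomC A' X), comp u i = comp v f ->
    exists! w : HomC P X, comp w f' = u /\ comp w i' = v.

Definition is_pullback (B C C' Q : K) (d : HomC B C) (g : HomC C' C)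
    (d' : HomC Q C') (g' : HomC Q B) : Prop :=
  comp d g' = comp g d' /\
  forall (X : K) (u : HomC X B) (v : HomC X C'), comp d u = comp g v ->
    exists! w : HomC X Q, comp g' w = u /\ comp d' w = v.

Definition E0 (W : seqclass) : Prop := forall A : K, adm_mono W (idm A).
Definition E0op (W : seqclass) : Prop := forall A : K, adm_epi W (idm A).

Definition E2 (W : seqclass) : Prop :=
  forall (A B : K) (i : HomC A B), adm_mono W i ->
  forall (A' : K) (f : HomC A A'),
    (exists (P : K) (i' : HomC A' P) (f' : HomC B P), is_pushout i f i' f') /\
    (forall (P : K) (i' : HomC A' P) (f' : HomC B P),
        is_pushout i f i' f' -> adm_mono W i').

Definition E2op (W : seqclass) : Prop :=
  forall (B C : K) (d : HomC B C), adm_epi W d ->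
  forall (C' : K) (g : HomC C' C),
    (exists (Q : K) (d' : HomC Q C') (g' : HomC Q B), is_pullback d g d' g') /\
    (forall (Q : K) (d' : HomC Q C') (g' : HomC Q B),
        is_pullback d g d' g' -> adm_epi W d').

Definition weakly_exact (W : seqclass) : Prop :=
  [/\ kc_class W, iso_closed W, dsum_closed W,
      E0 W /\ E0op W & E2 W /\ E2op W].

Definition exact_structure (W : seqclass) : Prop :=
  [/\ kc_class W, iso_closed W, E0 W /\ E0op W, E2 W /\ E2op W &
      (forall (A B D : K) (i : HomC A B) (j : HomC B D),
          adm_mono W i -> adm_mono W j -> adm_mono W (comp j i)) /\
      (forall (A B D : K) (d : HomC A B) (e : HomC B D),
          adm_epi W d -> adm_epi W e -> adm_epi W (comp e d))].

Definition is_max_exact (E : seqclass) : Prop :=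
  exact_structure E /\ forall W : seqclass, exact_structure W -> subclass W E.

Definition pushout_seq (A B C A' P : K) (i : HomC A B) (d : HomC B C)
    (f : HomC A A') (i' : HomC A' P) (d' : HomC P C) : Prop :=
  exists f' : HomC B P, [/\ is_pushout i f i' f', comp d' f' = d & comp d' i' = 0].

Definition pullback_seq (A B C C' Q : K) (i : HomC A B) (d : HomC B C)
    (g : HomC C' C) (i' : HomC A Q) (d' : HomC Q C') : Prop :=
  exists g' : HomC Q B, [/\ is_pullback d g d' g', comp g' i' = i & comp d' i' = 0].

(* (i, d) is a Baer sum  nabla_A (eta1 (+) eta2) Delta_C  of eta1 = (i1,d1), eta2 = (i2,d2) *)
Definition baer_sum (A B1 B2 C Q : K) (i1 : HomC A B1) (d1 : HomC B1 C)
    (i2 : HomC A B2) (d2 : HomC B2 C) (i : HomC A Q) (d : HomC Q C) : Prop :=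
  exists (SA SB SC : K)
    (a1 : HomC A SA) (a2 : HomC A SA) (a1' : HomC SA A) (a2' : HomC SA A)
    (b1 : HomC B1 SB) (b2 : HomC B2 SB) (b1' : HomC SB B1) (b2' : HomC SB B2)
    (c1 : HomC C SC) (c2 : HomC C SC) (c1' : HomC SC C) (c2' : HomC SC C),
    [/\ is_biproduct a1 a2 a1' a2', is_biproduct b1 b2 b1' b2',
        is_biproduct c1 c2 c1' c2' &
        exists (P : K) (j : HomC A P) (e : HomC P SC),
          pushout_seq (dsum a1 a2 a1' a2' b1 b2 b1' b2' i1 i2)
                      (dsum b1 b2 b1' b2' c1 c2 c1' c2' d1 d2)
                      (a1' + a2') j e /\
          pullback_seq j e (c1 + c2) i d].

Definition sum_class (W1 W2 : seqclass) : seqclass :=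
  fun (A' Q' C' : K) (i' : HomC A' Q') (d' : HomC Q' C') =>
    exists (A B1 B2 C Q : K) (i1 : HomC A B1) (d1 : HomC B1 C)
      (i2 : HomC A B2) (d2 : HomC B2 C) (i : HomC A Q) (d : HomC Q C),
      [/\ W1 A B1 C i1 d1, W2 A B2 C i2 d2, baer_sum i1 d1 i2 d2 i d
        & iso_seq i d i' d'].

End Defs.

Arguments sum_class {K} W1 W2 A B C i d.

(* Main.v *)
Require Import Defs.
From mathcomp Require Import all_boot all_algebra.
Set Implicit Arguments. Unset Strict Implicit. Unset Printing Implicit Defensive.
Import GRing.Theory.
Local Open Scope ring_scope.

Notation "f ⊚ g" := (Defs.comp f g) (at level 40, left associativity).

Section Alg.
Variable K : PreAdditive.
Implicit Types A B C D X Y : K.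

Lemma cA' A B C D (h : HomC C D) (g : HomC B C) (f : HomC A B) :
  (h ⊚ g) ⊚ f = h ⊚ (g ⊚ f).
Proof. by rewrite comp_assoc. Qed.
Lemma cDl A B C (g g' : HomC B C) (f : HomC A B) : (g + g') ⊚ f = g ⊚ f + g' ⊚ f.
Proof. exact: comp_addl. Qed.
Lemma cDr A B C (g : HomC B C) (f f' : HomC A B) : g ⊚ (f + f') = g ⊚ f + g ⊚ f'.
Proof. exact: comp_addr. Qed.
Lemma c1l A B (f : HomC A B) : idm B ⊚ f = f. Proof. exact: comp_id_l. Qed.
Lemma c1r A B (f : HomC A B) : f ⊚ idm A = f. Proof. exact: comp_id_r. Qed.
Lemma c0l A B C (f : HomC A B) : (0 : HomC B C) ⊚ f = 0.
Proof. have h := cDl (0 : HomC B C) 0 f. rewrite addr0 in h.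
have := congr1 (fun x => x - 0 ⊚ f) h. by rewrite /= addrK subrr => ->. Qed.
Lemma c0r A B C (g : HomC B C) : g ⊚ (0 : HomC A B) = 0.
Proof. have h := cDr g (0 : HomC A B) 0. rewrite addr0 in h.
have := congr1 (fun x => x - g ⊚ 0) h. by rewrite /= addrK subrr => ->. Qed.
Lemma cNl A B C (g : HomC B C) (f : HomC A B) : (- g) ⊚ f = - (g ⊚ f).
Proof. apply: (addrI (g ⊚ f)). by rewrite -cDl !subrr c0l. Qed.
Lemma cNr A B C (g : HomC B C) (f : HomC A B) : g ⊚ (- f) = - (g ⊚ f).
Proof. apply: (addrI (g ⊚ f)). by rewrite -cDr !subrr c0r. Qed.
Lemma cext A B C (f : HomC B C) (g : HomC A B) (h : HomC A C) :
  f ⊚ g = h -> forall X (x : HomC X A), f ⊚ (g ⊚ x) = h ⊚ x.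
Proof. by move=> e X x; rewrite comp_assoc e. Qed.
Lemma cext3 A B C D (f : HomC C D) (g : HomC B C) (h : HomC A B) (e : HomC A D) :
  f ⊚ (g ⊚ h) = e -> forall X (x : HomC X A), f ⊚ (g ⊚ (h ⊚ x)) = e ⊚ x.
Proof. by move=> E X x; rewrite -E !cA'. Qed.
End Alg.

Definition Rw (P : Prop) := P.
Lemma unRw P : Rw P -> P. Proof. by []. Qed.

Ltac cn := repeat progress rewrite ?cA' ?cDl ?cDr ?c1l ?c1r ?c0l ?c0r ?cNl ?cNr ?addr0 ?add0r ?oppr0 ?opprK.
Ltac crw H := rewrite ?H ?(cext H).
Ltac crwall := repeat (cn; match goal with H : Rw (_ ⊚ _ = _) |- _ =>
   progress (rewrite ?(unRw H); try rewrite ?(cext (unRw H)); try rewrite ?(cext3 (unRw H))) end); cn.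

Ltac toRw H := let t := type of H in change (Rw t) in H.
Ltac bip H := let a := fresh "bp" in let b := fresh "bp" in let c := fresh "bp" in
  let d := fresh "bp" in let e := fresh "bpS" in
  case: H => a b c d e; toRw a; toRw b; toRw c; toRw d.

Ltac acl :=
  rewrite ?addrA;
  repeat match goal with
  | |- ?L + ?t = ?R => try rewrite [in RHS](addrC t); repeat rewrite [RHS](addrAC _ t);
                       apply: (congr1 (fun z => z + t))
  end; try reflexivity.
Ltac cdone := crwall; try reflexivity; try acl.

Section Gen.
Variable K : PreAdditive.
Implicit Types A B C D X Y : K.

Lemma ker_mono A B C (i : HomC A B) (d : HomC B C) X (x y : HomC X A) :
  is_kernel i d -> i ⊚ x = i ⊚ y -> x = y.
Proof.
case=> di H e. have [g [_ U]] := H X (i ⊚ x) ltac:(by rewrite -cA' di c0l).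
by rewrite -(U x) // (U y).
Qed.

Lemma coker_epi A B C (i : HomC A B) (d : HomC B C) X (x y : HomC C X) :
  is_cokernel d i -> x ⊚ d = y ⊚ d -> x = y.
Proof.
case=> di H e. have [g [_ U]] := H X (x ⊚ d) ltac:(by rewrite cA' di c0r).
by rewrite -(U x) // (U y).
Qed.

Lemma po_uniq A B A' P (i : HomC A B) (f : HomC A A') i' f' X (w w' : HomC P X) :
  is_pushout i f i' f' -> w ⊚ f' = w' ⊚ f' -> w ⊚ i' = w' ⊚ i' -> w = w'.
Proof.
case=> sq H e1 e2. have [g [_ U]] := H X (w ⊚ f') (w ⊚ i') ltac:(by rewrite !cA' sq).
by rewrite -(U w) // (U w').
Qed.

Lemma po_ex A B A' P (i : HomC A B) (f : HomC A A') i' f' X (u : HomC B X) (v : HomC A' X) :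
  is_pushout i f i' f' -> u ⊚ i = v ⊚ f -> exists w : HomC P X, w ⊚ f' = u /\ w ⊚ i' = v.
Proof. case=> sq H e. by have [g [Hg _]] := H X u v e; exists g. Qed.

Lemma pb_uniq B C C' Q (d : HomC B C) (g : HomC C' C) (d' : HomC Q C') g' X (w w' : HomC X Q) :
  is_pullback d g d' g' -> g' ⊚ w = g' ⊚ w' -> d' ⊚ w = d' ⊚ w' -> w = w'.
Proof.
case=> sq H e1 e2. have [h [_ U]] := H X (g' ⊚ w) (d' ⊚ w) ltac:(by rewrite -!cA' sq).
by rewrite -(U w) // (U w').
Qed.

Lemma pb_ex B C C' Q (d : HomC B C) (g : HomC C' C) (d' : HomC Q C') g' X (u : HomC X B) (v : HomC X C') :
  is_pullback d g d' g' -> d ⊚ u = g ⊚ v -> exists w : HomC X Q, g' ⊚ w = u /\ d' ⊚ w = v.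
Proof. case=> sq H e. by have [h [Hh _]] := H X u v e; exists h. Qed.

Lemma iso_id A : is_iso (idm A). Proof. by exists (idm A); rewrite c1l. Qed.
Lemma iso_comp A B C (f : HomC A B) (g : HomC B C) : is_iso f -> is_iso g -> is_iso (g ⊚ f).
Proof.
case=> f' [f1 f2] [g' [g1 g2]]; exists (f' ⊚ g'); split.
- by rewrite cA' -(cA' g') g1 c1l.
- by rewrite cA' -(cA' f) f2 c1l.
Qed.
Lemma iso_inv A B (f : HomC A B) : is_iso f -> exists g : HomC B A, [/\ is_iso g, g ⊚ f = idm A & f ⊚ g = idm B].
Proof. case=> g [g1 g2]; exists g; split => //; by exists f. Qed.

Lemma iso_seq_refl A B C (i : HomC A B) (d : HomC B C) : iso_seq i d i d.
Proof. exists (idm A), (idm B), (idm C); split; rewrite ?c1l ?c1r //; exact: iso_id. Qed.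

Lemma iso_seq_sym A B C A' B' C' (i : HomC A B) (d : HomC B C) (i' : HomC A' B') (d' : HomC B' C') :
  iso_seq i d i' d' -> iso_seq i' d' i d.
Proof.
case=> a [b [c [ia ib ic e1 e2]]].
have [a' [ia' a1 a2]] := iso_inv ia. have [b' [ib' b1 b2]] := iso_inv ib.
have [c' [ic' c1 c2]] := iso_inv ic.
exists a', b', c'; split => //.
- have -> : i ⊚ a' = b' ⊚ (b ⊚ i) ⊚ a' by rewrite -cA' b1 c1l.
  by rewrite e1 !cA' a2 c1r.
- have -> : d ⊚ b' = c' ⊚ (c ⊚ d) ⊚ b' by rewrite -cA' c1 c1l.
  by rewrite e2 !cA' b2 c1r.
Qed.

Lemma iso_seq_trans A B C A' B' C' A'' B'' C'' (i : HomC A B) (d : HomC B C)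
  (i' : HomC A' B') (d' : HomC B' C') (i'' : HomC A'' B'') (d'' : HomC B'' C'') :
  iso_seq i d i' d' -> iso_seq i' d' i'' d'' -> iso_seq i d i'' d''.
Proof.
case=> a [b [c [ia ib ic e1 e2]]]; case=> a' [b' [c' [ia' ib' ic' e1' e2']]].
exists (a' ⊚ a), (b' ⊚ b), (c' ⊚ c); split; try exact: iso_comp.
- by rewrite cA' e1 -cA' e1' cA'.
- by rewrite cA' e2 -cA' e2' cA'.
Qed.

Lemma coker_replace (W : seqclass K) A B C C' (j : HomC A B) (e'' : HomC B C) (e : HomC B C') :
  kc_class W -> iso_closed W -> W A B C j e'' -> is_cokernel e j -> W A B C' j e.
Proof.
move=> kc ic Wj ce. have [_ ce''] := kc _ _ _ _ _ Wj.
case: (ce'') => e''j H''. case: (ce) => ej H.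
have [c [ce1 _]] := H'' C' e ej. have [c' [ce1' _]] := H C e'' e''j.
apply: (ic _ _ _ _ _ _ _ _ _ _ Wj). exists (idm A), (idm B), c; split; rewrite ?c1r ?c1l //; try exact: iso_id.
exists c'; split.
- apply: (coker_epi ce''). by rewrite cA' ce1 ce1' c1l.
- apply: (coker_epi ce). by rewrite cA' ce1' ce1 c1l.
Qed.

Lemma ker_replace (W : seqclass K) A A' B C (i'' : HomC A' B) (i : HomC A B) (d : HomC B C) :
  kc_class W -> iso_closed W -> W A' B C i'' d -> is_kernel i d -> W A B C i d.
Proof.
move=> kc ic Wi ki. have [ki'' _] := kc _ _ _ _ _ Wi.
case: (ki'') => di'' H''. case: (ki) => di H.
have [a [ka _]] := H A' i'' di''. have [a' [ka' _]] := H'' A i di.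
apply: (ic _ _ _ _ _ _ _ _ _ _ Wi). exists a, (idm B), (idm C); split; rewrite ?c1r ?c1l //; try exact: iso_id.
exists a'; split.
- apply: (ker_mono ki''). by rewrite -cA' ka' ka c1r.
- apply: (ker_mono ki). by rewrite -cA' ka ka' c1r.
Qed.

Lemma pushout_coker A B C A' P (i : HomC A B) (d : HomC B C) (f : HomC A A') (j : HomC A' P) (f' : HomC B P) (e : HomC P C) :
  kc_pair i d -> is_pushout i f j f' -> e ⊚ f' = d -> e ⊚ j = 0 -> is_cokernel e j.
Proof.
move=> [ki [di H]] po ef ej; split => // X h hj.
have [sq _] := po.
have [g [gd U]] := H X (h ⊚ f') ltac:(by rewrite cA' sq -cA' hj c0l).
exists g; split.
- apply: (po_uniq po); by rewrite cA' ?ef ?gd // ej c0r hj.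
- move=> g' eg. apply: U. by rewrite -ef -cA' eg.
Qed.

Lemma pullback_ker A B C C' Q (i : HomC A B) (d : HomC B C) (g : HomC C' C) (d' : HomC Q C') (g' : HomC Q B) (i' : HomC A Q) :
  kc_pair i d -> is_pullback d g d' g' -> g' ⊚ i' = i -> d' ⊚ i' = 0 -> is_kernel i' d'.
Proof.
move=> [[di H] ci] pb gi di'; split => // X x dx.
have [sq _] := pb.
have [y [iy U]] := H X (g' ⊚ x) ltac:(by rewrite -cA' sq cA' dx c0r).
exists y; split.
- apply: (pb_uniq pb); by rewrite -cA' ?gi ?iy // di' c0l dx.
- move=> y' ey. apply: U. by rewrite -gi cA' ey.
Qed.

Lemma T1 (W : seqclass K) A B C A' P (i : HomC A B) (d : HomC B C) (f : HomC A A') (j : HomC A' P) (e : HomC P C) :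
  kc_class W -> iso_closed W -> E2 W -> W A B C i d -> pushout_seq i d f j e -> W A' P C j e.
Proof.
move=> kc ic e2 Wi [f' [po ef ej]].
have [_ H] := e2 A B i (ex_intro _ C (ex_intro _ d Wi)) A' f.
have [C'' [e'' We]] := H P j f' po.
apply: (coker_replace kc ic We). exact: (pushout_coker (kc _ _ _ _ _ Wi) po).
Qed.

Lemma T2 (W : seqclass K) A B C C' Q (i : HomC A B) (d : HomC B C) (g : HomC C' C) (i' : HomC A Q) (d' : HomC Q C') :
  kc_class W -> iso_closed W -> E2op W -> W A B C i d -> pullback_seq i d g i' d' -> W A Q C' i' d'.
Proof.
move=> kc ic e2 Wi [g' [pb gi di]].
have [_ H] := e2 B C d (ex_intro _ A (ex_intro _ i Wi)) C' g.
have [A'' [i'' Wd]] := H Q d' g' pb.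
apply: (ker_replace kc ic Wd). exact: (pullback_ker (kc _ _ _ _ _ Wi) pb).
Qed.

Lemma FL (W : seqclass K) A B B' C (i : HomC A B) (d : HomC B C) (i' : HomC A B') (d' : HomC B' C) (s : HomC B B') :
  kc_class W -> E2op W -> W A B C i d -> kc_pair i' d' -> s ⊚ i = i' -> d' ⊚ s = d -> is_iso s.
Proof.
move=> kc e2 Wi kc' si ds.
have KCi : kc_pair i d := kc _ _ _ _ _ Wi.
have [[di Hi] _] := KCi.
have [ki' _] := kc'. have [di' _] := ki'.
have [[Q [q1 [q2 pb]]] Hadm] := e2 B C d (ex_intro _ A (ex_intro _ i Wi)) B' d'.
have [sq _] := pb.
have [sg [sg2 sg1]] := pb_ex pb (u := idm B) (v := s) ltac:(by rewrite ds c1r).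
have [k [k2 k1]] := pb_ex pb (u := 0) (v := i') ltac:(by rewrite c0r di').
have [k' [k'2 k'1]] := pb_ex pb (u := i) (v := 0) ltac:(by rewrite c0r di).
have [r kr] : exists r : HomC Q A, k ⊚ r = idm Q - sg ⊚ q2.
  have h0 : d' ⊚ (q1 ⊚ (idm Q - sg ⊚ q2)) = 0.
    by rewrite -cA' -sq cA' cDr cNr c1r -cA' sg2 c1l subrr c0r.
  have [y [iy _]] := ki'.2 Q _ h0. exists y.
  apply: (pb_uniq pb).
  - by rewrite -cA' k2 c0l cDr cNr c1r -cA' sg2 c1l subrr.
  - by rewrite -cA' k1 iy.
have rsg : r ⊚ sg = 0.
  apply: (ker_mono ki'). rewrite c0r -k1 cA' -(cA' k) kr cDl cNl c1l cA' sg2 c1r subrr.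
  by rewrite c0r.
have rk' : r ⊚ k' = - idm A.
  apply: (ker_mono ki'). rewrite cNr c1r -k1 cA' -(cA' k) kr cDl cNl c1l cDr cNr k'1 cA' k'2 -cA' sg1 si k1.
  by rewrite sub0r.
have [A'' [k'' Wq]] := Hadm Q q1 q2 pb.
have KCq : kc_pair k'' q1 := kc _ _ _ _ _ Wq.
have [_ [q1k'' Hq]] := KCq.
have [phi kphi] : exists phi : HomC A'' A, k' ⊚ phi = k''.
  have h0 : d ⊚ (q2 ⊚ k'') = 0 by rewrite -cA' sq cA' q1k'' c0r.
  have [y [iy _]] := Hi A'' _ h0. exists y.
  apply: (pb_uniq pb).
  - by rewrite -cA' k'2 iy.
  - by rewrite -cA' k'1 c0l q1k''.
have [t [tq _]] := Hq B (q2 + i ⊚ r) ltac:(by rewrite -kphi -cA' cDl cA' rk' cNr c1r k'2 subrr c0l).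
exists t; split.
- by rewrite -sg1 -cA' tq cDl sg2 cA' rsg c0r addr0.
- have [_ cq] := KCq.
  apply: (coker_epi cq). rewrite cA' tq c1l cDr -cA' si.
  rewrite -[q1 in RHS]c1r -[idm Q](subrK (sg ⊚ q2)) -kr cDr -cA' k1 -cA' sg1.
  by rewrite addrC.
Qed.

Lemma FL' (W : seqclass K) A B C A' B' C' (i : HomC A B) (d : HomC B C) (i' : HomC A' B') (d' : HomC B' C')
  (a : HomC A A') (s : HomC B B') (c : HomC C C') :
  kc_class W -> iso_closed W -> E2op W -> W A B C i d -> kc_pair i' d' -> is_iso a -> is_iso c ->
  s ⊚ i = i' ⊚ a -> d' ⊚ s = c ⊚ d -> is_iso s.
Proof.
move=> kc ic e2 Wi kc' ia icc si ds.
have [a' [ia' a1 a2]] := iso_inv ia.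
have W2 : W A' B C' (i ⊚ a') (c ⊚ d).
  apply: (ic _ _ _ _ _ _ _ _ _ _ Wi). exists a, (idm B), c; split => //; try exact: iso_id.
  - by rewrite c1l cA' a1 c1r.
  - by rewrite c1r.
apply: (FL kc e2 W2 kc' _ ds). by rewrite -cA' si cA' a2 c1r.
Qed.

End Gen.

Ltac mkRw H := let t := type of H in let n := fresh "R" in have n : Rw t := H.

Lemma bpS_of (K : PreAdditive) (X Y S : K) (i1 : HomC X S) (i2 : HomC Y S) p1 p2 :
  is_biproduct i1 i2 p1 p2 -> i1 ⊚ p1 + i2 ⊚ p2 = idm S.
Proof. by case. Qed.

Section Bip.
Variable K : PreAdditive.
Implicit Types A B C D X Y : K.

Lemma bip_out X Y S Z (i1 : HomC X S) (i2 : HomC Y S) p1 p2 (x y : HomC S Z) :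
  is_biproduct i1 i2 p1 p2 -> x ⊚ i1 = y ⊚ i1 -> x ⊚ i2 = y ⊚ i2 -> x = y.
Proof. case=> _ _ _ _ e h1 h2. by rewrite -[x]c1r -[y]c1r -e !cDr -!cA' h1 h2. Qed.

Lemma bip_in X Y S Z (i1 : HomC X S) (i2 : HomC Y S) p1 p2 (x y : HomC Z S) :
  is_biproduct i1 i2 p1 p2 -> p1 ⊚ x = p1 ⊚ y -> p2 ⊚ x = p2 ⊚ y -> x = y.
Proof. case=> _ _ _ _ e h1 h2. by rewrite -[x]c1l -[y]c1l -e !cDl !cA' h1 h2. Qed.

Lemma bip_swap X Y S (i1 : HomC X S) (i2 : HomC Y S) p1 p2 :
  is_biproduct i1 i2 p1 p2 -> is_biproduct i2 i1 p2 p1.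
Proof. case=> *; split => //; by rewrite addrC. Qed.

Lemma bip_zero2 X Y (z : HomC Y X) (z' : HomC X Y) : idm Y = 0 -> is_biproduct (idm X) z (idm X) z'.
Proof.
move=> Y0. have zz : z = 0 by rewrite -[z]c1r Y0 c0r.
have zz' : z' = 0 by rewrite -[z']c1l Y0 c0l.
subst; split; rewrite ?c1l ?c0l ?c0r ?addr0 //.
Qed.

Lemma bip_zero1 X Y (z : HomC Y X) (z' : HomC X Y) : idm Y = 0 -> is_biproduct z (idm X) z' (idm X).
Proof. move=> Y0; apply: bip_swap; exact: bip_zero2. Qed.

Lemma dsum_comp X Y S X' Y' T X'' Y'' U
  (i1 : HomC X S) (i2 : HomC Y S) (p1 : HomC S X) (p2 : HomC S Y)
  (j1 : HomC X' T) (j2 : HomC Y' T) (q1 : HomC T X') (q2 : HomC T Y')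
  (k1 : HomC X'' U) (k2 : HomC Y'' U) (r1 : HomC U X'') (r2 : HomC U Y'')
  (f : HomC X X') (g : HomC Y Y') (f' : HomC X' X'') (g' : HomC Y' Y'') :
  is_biproduct j1 j2 q1 q2 ->
  dsum j1 j2 q1 q2 k1 k2 r1 r2 f' g' ⊚ dsum i1 i2 p1 p2 j1 j2 q1 q2 f g =
  dsum i1 i2 p1 p2 k1 k2 r1 r2 (f' ⊚ f) (g' ⊚ g).
Proof. move=> H; bip H; rewrite /dsum; cdone. Qed.

Lemma dsum_iso X Y S X' Y' T
  (i1 : HomC X S) (i2 : HomC Y S) (p1 : HomC S X) (p2 : HomC S Y)
  (j1 : HomC X' T) (j2 : HomC Y' T) (q1 : HomC T X') (q2 : HomC T Y')
  (f : HomC X X') (g : HomC Y Y') :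
  is_biproduct i1 i2 p1 p2 -> is_biproduct j1 j2 q1 q2 -> is_iso f -> is_iso g ->
  is_iso (dsum i1 i2 p1 p2 j1 j2 q1 q2 f g).
Proof.
move=> Hi Hj [f' [f1 f2]] [g' [g1 g2]].
exists (dsum j1 j2 q1 q2 i1 i2 p1 p2 f' g'); split.
- by rewrite dsum_comp // f1 g1; case: Hi => _ _ _ _ <-; rewrite /dsum !c1l.
- by rewrite dsum_comp // f2 g2; case: Hj => _ _ _ _ <-; rewrite /dsum !c1l.
Qed.

Lemma bip_shuffle P Q P' Q' X1 X2 S S' U
  (x1 : HomC P X1) (x2 : HomC P' X1) (x1' : HomC X1 P) (x2' : HomC X1 P')
  (z1 : HomC Q X2) (z2 : HomC Q' X2) (z1' : HomC X2 Q) (z2' : HomC X2 Q')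
  (s1 : HomC P S) (s2 : HomC Q S) (s1' : HomC S P) (s2' : HomC S Q)
  (t1 : HomC P' S') (t2 : HomC Q' S') (t1' : HomC S' P') (t2' : HomC S' Q')
  (u1 : HomC S U) (u2 : HomC S' U) (u1' : HomC U S) (u2' : HomC U S') :
  is_biproduct x1 x2 x1' x2' -> is_biproduct z1 z2 z1' z2' ->
  is_biproduct s1 s2 s1' s2' -> is_biproduct t1 t2 t1' t2' ->
  is_biproduct u1 u2 u1' u2' ->
  is_biproduct (u1 ⊚ s1 ⊚ x1' + u2 ⊚ t1 ⊚ x2') (u1 ⊚ s2 ⊚ z1' + u2 ⊚ t2 ⊚ z2')
               (x1 ⊚ s1' ⊚ u1' + x2 ⊚ t1' ⊚ u2') (z1 ⊚ s2' ⊚ u1' + z2 ⊚ t2' ⊚ u2').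
Proof.
move=> Hx Hz Hs Ht Hu.
bip Hx; bip Hz; bip Hs; bip Ht; bip Hu. split; try by crwall.
rewrite -bpS3 -[u1' in RHS]c1l -bpS1 -[u2' in RHS]c1l -bpS2; cdone.
Qed.
End Bip.

Section ExDsum.
Variable K : PreAdditive.
Implicit Types A B C D X Y : K.

Lemma dsum_coker A B C A' B' C' (i : HomC A B) (d : HomC B C) (i' : HomC A' B') (d' : HomC B' C')
  SA SB SC (a1 : HomC A SA) (a2 : HomC A' SA) a1' a2' (b1 : HomC B SB) (b2 : HomC B' SB) b1' b2'
  (c1 : HomC C SC) (c2 : HomC C' SC) c1' c2' :
  kc_pair i d -> kc_pair i' d' -> is_biproduct a1 a2 a1' a2' -> is_biproduct b1 b2 b1' b2' ->
  is_biproduct c1 c2 c1' c2' ->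
  is_cokernel (dsum b1 b2 b1' b2' c1 c2 c1' c2' d d') (dsum a1 a2 a1' a2' b1 b2 b1' b2' i i').
Proof.
move=> [_ cd] [_ cd'] Ha Hb Hc.
have [di Hd] := cd. have [di' Hd'] := cd'.
split; first by rewrite dsum_comp // di di' /dsum !c0l !c0r addr0.
move=> X h hi.
have h1 : (h ⊚ b1) ⊚ i = 0.
  have := congr1 (fun z => z ⊚ a1) hi. rewrite c0l /dsum => <-. move: Ha Hb; move=> Ha' Hb'. bip Ha'; bip Hb'. cdone.
have h2 : (h ⊚ b2) ⊚ i' = 0.
  have := congr1 (fun z => z ⊚ a2) hi. rewrite c0l /dsum => <-. move: Ha Hb; move=> Ha' Hb'. bip Ha'; bip Hb'. cdone.
have [g1 [g1d U1]] := Hd X _ h1. have [g2 [g2d U2]] := Hd' X _ h2.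
exists (g1 ⊚ c1' + g2 ⊚ c2'); split.
- have Sb := bpS_of Hb. move: Hc => Hc'. bip Hc'. mkRw g1d; mkRw g2d. rewrite /dsum. crwall.
  by rewrite -cDr Sb c1r.
- move=> g' eg. have Sc := bpS_of Hc. move: Hc => Hc'; bip Hc'.
  have e1 : g' ⊚ c1 = g1.
    symmetry; apply: U1. rewrite -eg /dsum. move: Hb => Hb'; bip Hb'. cdone.
  have e2 : g' ⊚ c2 = g2.
    symmetry; apply: U2. rewrite -eg /dsum. move: Hb => Hb'; bip Hb'. cdone.
  by rewrite -e1 -e2 !cA' -cDr Sc c1r.
Qed.

Lemma exact_dsum (E : seqclass K) : is_additive K -> exact_structure E -> dsum_closed E.
Proof.
move=> [_ Kb] [kc ic _ [e2 _] [cm _]].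
move=> A B C A' B' C' i d i' d' Ei Ei' SA SB SC a1 a2 a1' a2' b1 b2 b1' b2' c1 c2 c1' c2' Ha Hb Hc.
have [T [t1 [t2 [t1' [t2' Ht]]]]] := Kb B A'.
have Sa := bpS_of Ha. have Sb := bpS_of Hb. have St := bpS_of Ht.
pose j := t1 ⊚ i ⊚ a1' + t2 ⊚ a2'.
have po1 : is_pushout i a1 j t1.
  split; first by rewrite /j; move: Ha => Ha'; bip Ha'; cdone.
  move=> X u v uv. exists (u ⊚ t1' + v ⊚ a2 ⊚ t2'); split.
  - split.
    + move: Ht => Ht'; bip Ht'; cdone.
    + rewrite /j. move: Ht => Ht'; bip Ht'. crwall. rewrite -!cA' uv !cA' -cDr Sa. by rewrite c1r.
  - move=> w [w1 w2]. symmetry. apply: (bip_out Ht).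
    + by rewrite w1; move: Ht => Ht'; bip Ht'; cdone.
    + have e : t2 = j ⊚ a2 by rewrite /j; move: Ha => Ha'; bip Ha'; cdone.
      rewrite [in LHS]e -cA' w2. move: Ht Ha => Ht' Ha'; bip Ht'; bip Ha'; cdone.
have mj : adm_mono E j.
  have [_ H] := e2 A B i (ex_intro _ C (ex_intro _ d Ei)) SA a1. exact: H _ _ _ po1.
pose j2 := b1 ⊚ t1' + b2 ⊚ i' ⊚ t2'.
have po2 : is_pushout i' t2 j2 b2.
  split; first by rewrite /j2; move: Ht => Ht'; bip Ht'; cdone.
  move=> X u v uv. exists (v ⊚ t1 ⊚ b1' + u ⊚ b2'); split.
  - split.
    + move: Hb => Hb'; bip Hb'; cdone.
    + rewrite /j2. move: Hb => Hb'; bip Hb'. crwall. by rewrite -(cA' u) uv !cA' -cDr St c1r.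
  - move=> w [w1 w2]. symmetry. apply: (bip_out Hb).
    + have e : b1 = j2 ⊚ t1 by rewrite /j2; move: Ht => Ht'; bip Ht'; cdone.
      rewrite [in LHS]e -cA' w2. move: Hb => Hb'; bip Hb'; cdone.
    + by rewrite w1; move: Hb => Hb'; bip Hb'; cdone.
have mj2 : adm_mono E j2.
  have [_ H] := e2 A' B' i' (ex_intro _ C' (ex_intro _ d' Ei')) T t2. exact: H _ _ _ po2.
have ejj : j2 ⊚ j = dsum a1 a2 a1' a2' b1 b2 b1' b2' i i'.
  rewrite /j2 /j /dsum. move: Ht => Ht'; bip Ht'. cdone.
have [C'' [e Ee]] := cm _ _ _ _ _ mj mj2. rewrite ejj in Ee.
apply: (coker_replace kc ic Ee). apply: dsum_coker => //; exact: kc _ _ _ _ _ _.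
Qed.

End ExDsum.


Set Implicit Arguments. Unset Strict Implicit. Unset Printing Implicit Defensive.
Import GRing.Theory.
Local Open Scope ring_scope.

Definition witness (K : PreAdditive) (Emax W1 W2 : seqclass K) (A' B' C' : K) (i' : HomC A' B') (d' : HomC B' C') : Prop :=
 exists (A C SA SB SC R B1 B2 : K) (i1 : HomC A B1) (d1 : HomC B1 C) (i2 : HomC A B2) (d2 : HomC B2 C)
   (a1 a2 : HomC A SA) (a1' a2' : HomC SA A) (b1 : HomC B1 SB) (b2 : HomC B2 SB) (b1' : HomC SB B1) (b2' : HomC SB B2)
   (c1 c2 : HomC C SC) (c1' c2' : HomC SC C) (k : HomC SA R) (q : HomC R C) (r : HomC R SB) (rho : HomC R B')
   (al : HomC A A') (ga : HomC C C'),
   [/\ W1 A B1 C i1 d1 /\ W2 A B2 C i2 d2,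
       [/\ is_biproduct a1 a2 a1' a2', is_biproduct b1 b2 b1' b2' & is_biproduct c1 c2 c1' c2'],
       Emax SA R C k q /\ (is_iso al /\ is_iso ga) &
       [/\ r ⊚ k = dsum a1 a2 a1' a2' b1 b2 b1' b2' i1 i2,
           dsum b1 b2 b1' b2' c1 c2 c1' c2' d1 d2 ⊚ r = (c1 + c2) ⊚ q,
           rho ⊚ k = i' ⊚ al ⊚ (a1' + a2') &
           d' ⊚ rho = ga ⊚ q]].

Section Main.
Variable K : PreAdditive.
Variables Emax W1 W2 : seqclass K.
Hypothesis kcE : kc_class Emax.
Hypothesis icE : iso_closed Emax.
Hypothesis e2E : E2 Emax.
Hypothesis e2oE : E2op Emax.
Hypothesis dsE : dsum_closed Emax.
Hypothesis s1 : subclass W1 Emax.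
Hypothesis s2 : subclass W2 Emax.

Lemma dsum_zero (X Y S X' Y' T : K) (i1 : HomC X S) (i2 : HomC Y S) p1 p2 (j1 : HomC X' T) (j2 : HomC Y' T) q1 q2 :
  dsum i1 i2 p1 p2 j1 j2 q1 q2 (0 : HomC X X') (0 : HomC Y Y') = 0.
Proof. by rewrite /dsum !c0l !c0r addr0. Qed.

Lemma kcl (A B C : K) (i : HomC A B) (d : HomC B C) : Emax i d -> kc_pair i d.
Proof. exact: kcE. Qed.

Lemma W_to_S (A' B' C' : K) (i' : HomC A' B') (d' : HomC B' C') :
  witness Emax W1 W2 i' d' -> kc_pair i' d' -> sum_class W1 W2 A' B' C' i' d'.
Proof.
move=> [A [C [SA [SB [SC [R [B1 [B2 [i1 [d1 [i2 [d2 [a1 [a2 [a1' [a2' [b1 [b2 [b1' [b2'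
  [c1 [c2 [c1' [c2' [k [q [r [rho [al [ga [[Wi1 Wi2] [Ha Hb Hc] [Ez [ial iga]] [eq1 eq2 eq3 eq4]]]]]]]]]]]]]]]]]]]]]]]]]]]]]]]] kc'.
have Eeta := dsE (s1 Wi1) (s2 Wi2) Ha Hb Hc.
set Di := dsum a1 a2 a1' a2' b1 b2 b1' b2' i1 i2 in Eeta eq1.
set Dd := dsum b1 b2 b1' b2' c1 c2 c1' c2' d1 d2 in Eeta eq2.
have [[P [j [f' po]]] _] := e2E (ex_intro _ SC (ex_intro _ Dd Eeta)) (a1' + a2').
have DdDi : Dd ⊚ Di = 0.
  have [[di1 _] _] := kcl (s1 Wi1). have [[di2 _] _] := kcl (s2 Wi2).
  by rewrite /Dd /Di dsum_comp // di1 di2 dsum_zero.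
have [e [ef ej]] := po_ex po (u := Dd) (v := 0) ltac:(by rewrite DdDi c0l).
have pos : pushout_seq Di Dd (a1' + a2') j e by exists f'.
have Eje := T1 kcE icE e2E Eeta pos.
have [[Q [dQ [g' pb]]] _] := e2oE (ex_intro _ A (ex_intro _ j Eje)) (c1 + c2).
have [iQ [gi di]] := pb_ex pb (u := j) (v := 0) ltac:(by rewrite ej c0r).
have pbs : pullback_seq j e (c1 + c2) iQ dQ by exists g'.
have EQ := T2 kcE icE e2oE Eje pbs.
have baer : baer_sum i1 d1 i2 d2 iQ dQ.
  by exists SA, SB, SC, a1, a2, a1', a2', b1, b2, b1', b2', c1, c2, c1', c2'; split => //; exists P, j, e.
have [qk _] := kcl Ez.
have [[Pz [jz [fz poz]]] _] := e2E (ex_intro _ C (ex_intro _ q Ez)) (a1' + a2').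
have [qk0 _] := qk.
have [ez [ezf ezj]] := po_ex poz (u := q) (v := 0) ltac:(by rewrite qk0 c0l).
have Ez2 := T1 kcE icE e2E Ez (ex_intro _ fz (And3 poz ezf ezj)).
have [sq _] := po. have [sqz _] := poz.
have [t [gt dt]] := pb_ex pb (u := f' ⊚ r) (v := q) ltac:(by rewrite -cA' ef eq2).
have tk : t ⊚ k = iQ ⊚ (a1' + a2').
  apply: (pb_uniq pb).
  - by rewrite -cA' gt cA' eq1 sq -cA' gi.
  - by rewrite -cA' dt qk0 -cA' di c0l.
have [u [uf uj]] := po_ex poz tk.
have uez : dQ ⊚ u = ez.
  apply: (po_uniq poz).
  - by rewrite cA' uf dt ezf.
  - by rewrite cA' uj di ezj.
have iu : is_iso u := FL kcE e2oE Ez2 (kcl EQ) uj uez.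
have [v [vf vj]] := po_ex poz (u := rho) (v := i' ⊚ al) eq3.
have vez : d' ⊚ v = ga ⊚ ez.
  apply: (po_uniq poz).
  - by rewrite !cA' vf ezf eq4.
  - have [[di' _] _] := kc'. by rewrite !cA' vj ezj c0r -cA' di' c0l.
have iv : is_iso v := FL' kcE icE e2oE Ez2 kc' ial iga vj vez.
exists A, B1, B2, C, Q, i1, d1, i2, d2, iQ, dQ; split => //.
apply: (iso_seq_trans (i' := jz) (d' := ez)).
- apply: iso_seq_sym. exists (idm A), u, (idm C); split; rewrite ?c1l ?c1r ?uez //; try exact: iso_id.
- by exists al, v, ga; split.
Qed.

Lemma S_to_W (A' B' C' : K) (i' : HomC A' B') (d' : HomC B' C') :
  sum_class W1 W2 A' B' C' i' d' -> witness Emax W1 W2 i' d'.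
Proof.
move=> [A [B1 [B2 [C [Q [i1 [d1 [i2 [d2 [iQ [dQ [Wi1 Wi2 baer isq]]]]]]]]]]]].
move: baer => [SA [SB [SC [a1 [a2 [a1' [a2' [b1 [b2 [b1' [b2' [c1 [c2 [c1' [c2' [Ha Hb Hc
  [P [j [e [[f' [po ef ej]] [g' [pb gi di]]]]]]]]]]]]]]]]]]]]]].
move: isq => [al [b [ga [ial ib iga e1 e2]]]].
have Eeta := dsE (s1 Wi1) (s2 Wi2) Ha Hb Hc.
set Di := dsum a1 a2 a1' a2' b1 b2 b1' b2' i1 i2 in Eeta po.
set Dd := dsum b1 b2 b1' b2' c1 c2 c1' c2' d1 d2 in Eeta ef.
have DdDi : Dd ⊚ Di = 0.
  have [[di1 _] _] := kcl (s1 Wi1). have [[di2 _] _] := kcl (s2 Wi2).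
  by rewrite /Dd /Di dsum_comp // di1 di2 dsum_zero.
have [[R [q [gR pbR]]] _] := e2oE (ex_intro _ SA (ex_intro _ Di Eeta)) (c1 + c2).
have [k [gk qk]] := pb_ex pbR (u := Di) (v := 0) ltac:(by rewrite DdDi c0r).
have Ez := T2 kcE icE e2oE Eeta (ex_intro _ gR (And3 pbR gk qk)).
have [sqR _] := pbR. have [sq _] := po. have [sqQ _] := pb.
have [rQ [grQ drQ]] := pb_ex pb (u := f' ⊚ gR) (v := q) ltac:(by rewrite -cA' ef sqR).
have rk : rQ ⊚ k = iQ ⊚ (a1' + a2').
  apply: (pb_uniq pb).
  - by rewrite -cA' grQ cA' gk sq -cA' gi.
  - by rewrite -cA' drQ qk -cA' di c0l.
exists A, C, SA, SB, SC, R, B1, B2, i1, d1, i2, d2, a1, a2, a1', a2', b1, b2, b1', b2', c1, c2, c1', c2', k, q, gR, (b ⊚ rQ), al, ga.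
split => //.
split => //.
- by rewrite cA' rk -cA' e1.
- by rewrite -cA' -e2 cA' drQ.
Qed.

Lemma S_in_E (A' B' C' : K) (i' : HomC A' B') (d' : HomC B' C') :
  sum_class W1 W2 A' B' C' i' d' -> Emax i' d'.
Proof.
move=> [A [B1 [B2 [C [Q [i1 [d1 [i2 [d2 [iQ [dQ [Wi1 Wi2 baer isq]]]]]]]]]]]].
move: baer => [SA [SB [SC [a1 [a2 [a1' [a2' [b1 [b2 [b1' [b2' [c1 [c2 [c1' [c2' [Ha Hb Hc
  [P [j [e [pos pbs]]]]]]]]]]]]]]]]]]]].
have Eeta := dsE (s1 Wi1) (s2 Wi2) Ha Hb Hc.
have Eje := T1 kcE icE e2E Eeta pos.
have EQ := T2 kcE icE e2oE Eje pbs.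
exact: icE EQ isq.
Qed.

End Main.

Set Implicit Arguments. Unset Strict Implicit. Unset Printing Implicit Defensive.
Import GRing.Theory.
Local Open Scope ring_scope.

Ltac wdestr H := move: H => [A [C [SA [SB [SC [R [B1 [B2 [i1 [d1 [i2 [d2 [a1 [a2 [a1' [a2' [b1 [b2 [b1' [b2'
  [c1 [c2 [c1' [c2' [k [q [r [rho [al [ga [[Wi1 Wi2] [Ha Hb Hc] [Ez [ial iga]] [eq1 eq2 eq3 eq4]]]]]]]]]]]]]]]]]]]]]]]]]]]]]]]].

Section Wit.
Variable K : PreAdditive.
Variable Emax : seqclass K.

Lemma witness_iso (Wa Wb : seqclass K) (A' B' C' A'' B'' C'' : K) (i' : HomC A' B') (d' : HomC B' C')
  (i'' : HomC A'' B'') (d'' : HomC B'' C'') :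
  witness Emax Wa Wb i' d' -> iso_seq i' d' i'' d'' -> witness Emax Wa Wb i'' d''.
Proof.
move=> H [a [b [c [ia ib ic e1 e2]]]]. wdestr H.
exists A, C, SA, SB, SC, R, B1, B2, i1, d1, i2, d2, a1, a2, a1', a2', b1, b2, b1', b2', c1, c2, c1', c2', k, q, r, (b ⊚ rho), (a ⊚ al), (c ⊚ ga).
split => //.
- split => //; split; exact: iso_comp.
- split => //.
  + mkRw eq3; mkRw e1; cdone.
  + rewrite -cA' -e2. mkRw eq4; cdone.
Qed.

Lemma witness_swap (Wa Wb : seqclass K) (A' B' C' : K) (i' : HomC A' B') (d' : HomC B' C') :
  witness Emax Wa Wb i' d' -> witness Emax Wb Wa i' d'.
Proof.
move=> H. wdestr H.
exists A, C, SA, SB, SC, R, B2, B1, i2, d2, i1, d1, a2, a1, a2', a1', b2, b1, b2', b1', c2, c1, c2', c1', k, q, r, rho, al, ga.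
split => //.
- split; exact: bip_swap.
- split.
  + by rewrite eq1 /dsum addrC.
  + have -> : dsum b2 b1 b2' b1' c2 c1 c2' c1' d2 d1 = dsum b1 b2 b1' b2' c1 c2 c1' c2' d1 d2.
      by rewrite /dsum addrC.
    by rewrite eq2 addrC.
  + by rewrite eq3 addrC.
  + exact: eq4.
Qed.

Lemma zero_coker (A X : K) (dA : HomC A X) : is_cokernel dA (idm A) -> dA = 0 /\ idm X = 0.
Proof.
move=> [e H]. rewrite c1r in e. split => //.
have [g [_ U]] := H X 0 ltac:(by rewrite c0l).
by rewrite -(U (idm X)) ?c1l // (U 0) ?c0l.
Qed.

Lemma zero_ker (Y C : K) (iC : HomC Y C) : is_kernel iC (idm C) -> iC = 0 /\ idm Y = 0.
Proof.
move=> [e H]. rewrite c1l in e. split => //.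
have [g [_ U]] := H Y 0 ltac:(by rewrite c0r).
by rewrite -(U (idm Y)) ?c1r // (U 0) ?c0r.
Qed.

Lemma witness_split (Wa Wb : seqclass K) : is_additive K -> kc_class Emax -> dsum_closed Emax -> weakly_exact Wb ->
  subclass Wb Emax -> forall (A B C : K) (i : HomC A B) (d : HomC B C),
  Wa A B C i d -> Emax i d -> witness Emax Wa Wb i d.
Proof.
move=> [_ Kb] kcE dsE [kcb icb dsb [e0b e0ob] _] sb A B C i d Wi Ei.
have [X [dA WdA]] := e0b A. have [Y [iC WiC]] := e0ob C.
have [dA0 X0] := zero_coker (kcb _ _ _ _ _ WdA).2.
have [iC0 Y0] := zero_ker (kcb _ _ _ _ _ WiC).1.
have [SBs [bb1 [bb2 [bb1' [bb2' Hbb]]]]] := Kb A C.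
have Wsig := dsb _ _ _ _ _ _ _ _ _ _ WdA WiC _ _ _ _ _ _ _ _ _ _ _ _ _ _ _
  (bip_zero2 (0 : HomC Y A) (0 : HomC A Y) Y0) Hbb (bip_zero1 (0 : HomC X C) (0 : HomC C X) X0).
have E1 : dsum (idm A) (0 : HomC Y A) (idm A) (0 : HomC A Y) bb1 bb2 bb1' bb2' (idm A) iC = bb1.
  by rewrite /dsum iC0; cn.
have E2 : dsum bb1 bb2 bb1' bb2' (0 : HomC X C) (idm C) (0 : HomC C X) (idm C) dA (idm C) = bb2'.
  by rewrite /dsum; cn.
rewrite E1 E2 in Wsig.
have [SAz [sa1 [sa2 [sa1' [sa2' Hsa]]]]] := Kb A A.
have [RR [rr1 [rr2 [rr1' [rr2' Hrr]]]]] := Kb B A.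
have [SB [sb1 [sb2 [sb1' [sb2' Hsb]]]]] := Kb B SBs.
have [SC [sc1 [sc2 [sc1' [sc2' Hsc]]]]] := Kb C C.
have Ez := dsE _ _ _ _ _ _ _ _ _ _ Ei (sb _ _ _ _ _ WdA) _ _ _ _ _ _ _ _ _ _ _ _ _ _ _ Hsa Hrr
  (bip_zero2 (0 : HomC X C) (0 : HomC C X) X0).
have [[di _] _] := kcE _ _ _ _ _ Ei.
exists A, C, SAz, SB, SC, RR, B, SBs, i, d, bb1, bb2', sa1, sa2, sa1', sa2', sb1, sb2, sb1', sb2', sc1, sc2, sc1', sc2'.
exists (dsum sa1 sa2 sa1' sa2' rr1 rr2 rr1' rr2' i (idm A)),
  (dsum rr1 rr2 rr1' rr2' (idm C) (0 : HomC X C) (idm C) (0 : HomC C X) d dA).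
exists (sb1 ⊚ rr1' + sb2 ⊚ (bb1 ⊚ rr2' + bb2 ⊚ d ⊚ rr1')), (rr1' + i ⊚ rr2'), (idm A), (idm C).
split; [by split | by split | by split => //; split; exact: iso_id | ].
rewrite /dsum dA0. mkRw di. bip Hsa; bip Hrr; bip Hsb; bip Hsc; bip Hbb.
split; cdone.
Qed.
Lemma witness_po (Wa Wb : seqclass K) : is_additive K -> kc_class Emax -> iso_closed Emax -> E2 Emax ->
  weakly_exact Wa -> weakly_exact Wb ->
  forall (A' B' C' A'' P : K) (i' : HomC A' B') (d' : HomC B' C') (f : HomC A' A'') (j : HomC A'' P)
    (f'' : HomC B' P) (e : HomC P C'),
  witness Emax Wa Wb i' d' -> is_pushout i' f j f'' -> e ⊚ f'' = d' -> e ⊚ j = 0 -> witness Emax Wa Wb j e.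
Proof.
move=> [_ Kb] kcE icE e2E [kca ica _ _ [e2a _]] [kcb icb _ _ [e2b _]] A' B' C' A'' P i' d' f j f'' e H po ef ej.
wdestr H.
pose g := f ⊚ al.
have [[P1 [j1 [f1 po1]]] _] := e2a A B1 i1 (ex_intro _ C (ex_intro _ d1 Wi1)) A'' g.
have [[P2 [j2 [f2 po2]]] _] := e2b A B2 i2 (ex_intro _ C (ex_intro _ d2 Wi2)) A'' g.
have [[di1 _] _] := kca _ _ _ _ _ Wi1. have [[di2 _] _] := kcb _ _ _ _ _ Wi2.
have [e1 [e1f e1j]] := po_ex po1 (u := d1) (v := 0) ltac:(by rewrite di1 c0l).
have [e2 [e2f e2j]] := po_ex po2 (u := d2) (v := 0) ltac:(by rewrite di2 c0l).
have Wj1 := T1 kca ica e2a Wi1 (ex_intro _ f1 (And3 po1 e1f e1j)).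
have Wj2 := T1 kcb icb e2b Wi2 (ex_intro _ f2 (And3 po2 e2f e2j)).
have [SA'' [x1 [x2 [x1' [x2' Hx]]]]] := Kb A'' A''.
have [SB'' [y1 [y2 [y1' [y2' Hy]]]]] := Kb P1 P2.
pose G := dsum a1 a2 a1' a2' x1 x2 x1' x2' g g.
have [[R'' [k'' [fR poR]]] _] := e2E SA R k (ex_intro _ C (ex_intro _ q Ez)) SA'' G.
have [[qk0 _] _] := kcE _ _ _ _ _ Ez.
have [q'' [qf qk]] := po_ex poR (u := q) (v := 0) ltac:(by rewrite qk0 c0l).
have Ez'' := T1 kcE icE e2E Ez (ex_intro _ fR (And3 poR qf qk)).
have [sq1 _] := po1. have [sq2 _] := po2. have [sq _] := po.
have [r'' [rf rk]] := po_ex poR (u := dsum b1 b2 b1' b2' y1 y2 y1' y2' f1 f2 ⊚ r)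
  (v := dsum x1 x2 x1' x2' y1 y2 y1' y2' j1 j2)
  ltac:(by rewrite cA' eq1 /G !dsum_comp // sq1 sq2).
have [rho'' [rhof rhok]] := po_ex poR (u := f'' ⊚ rho) (v := j ⊚ (x1' + x2'))
  ltac:(by rewrite /G /dsum /g; mkRw sq; mkRw eq3; move: Ha Hx => Ha' Hx'; bip Ha'; bip Hx'; cdone).
exists A'', C, SA'', SB'', SC, R'', P1, P2, j1, e1, j2, e2, x1, x2, x1', x2', y1, y2, y1', y2', c1, c2, c1', c2'.
exists k'', q'', r'', rho'', (idm A''), ga.
split; [by split | by split | by split => //; split => //; exact: iso_id | ].
split.
- exact: rk.
- apply: (po_uniq poR).
  + by rewrite cA' rf -cA' dsum_comp // e1f e2f eq2 cA' qf.
  + by rewrite cA' rk dsum_comp // e1j e2j dsum_zero cA' qk c0r.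
- by rewrite c1r.
- apply: (po_uniq poR).
  + by rewrite cA' rhof -cA' ef eq4 cA' qf.
  + by rewrite cA' rhok -cA' ej c0l cA' qk c0r.
Qed.

Lemma witness_pb (Wa Wb : seqclass K) : is_additive K -> kc_class Emax -> iso_closed Emax -> E2op Emax ->
  weakly_exact Wa -> weakly_exact Wb ->
  forall (A' B' C' C'' Q : K) (i' : HomC A' B') (d' : HomC B' C') (g : HomC C'' C') (dQ : HomC Q C'')
    (g' : HomC Q B') (iQ : HomC A' Q),
  witness Emax Wa Wb i' d' -> is_pullback d' g dQ g' -> g' ⊚ iQ = i' -> dQ ⊚ iQ = 0 -> witness Emax Wa Wb iQ dQ.
Proof.
move=> [_ Kb] kcE icE e2oE [kca ica _ _ [_ e2a]] [kcb icb _ _ [_ e2b]] A' B' C' C'' Q i' d' g dQ g' iQ H pb gi di.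
wdestr H.
have [ga' [iga' ga1 ga2]] := iso_inv iga.
pose h := ga' ⊚ g.
have [[R1 [d1'' [g1 pb1]]] _] := e2a B1 C d1 (ex_intro _ A (ex_intro _ i1 Wi1)) C'' h.
have [[R2 [d2'' [g2 pb2]]] _] := e2b B2 C d2 (ex_intro _ A (ex_intro _ i2 Wi2)) C'' h.
have [[di1 _] _] := kca _ _ _ _ _ Wi1. have [[di2 _] _] := kcb _ _ _ _ _ Wi2.
have [i1'' [gi1 di1'']] := pb_ex pb1 (u := i1) (v := 0) ltac:(by rewrite di1 c0r).
have [i2'' [gi2 di2'']] := pb_ex pb2 (u := i2) (v := 0) ltac:(by rewrite di2 c0r).
have Wj1 := T2 kca ica e2a Wi1 (ex_intro _ g1 (And3 pb1 gi1 di1'')).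
have Wj2 := T2 kcb icb e2b Wi2 (ex_intro _ g2 (And3 pb2 gi2 di2'')).
have [[R'' [q'' [gR pbR]]] _] := e2oE R C q (ex_intro _ SA (ex_intro _ k Ez)) C'' h.
have [[qk0 _] _] := kcE _ _ _ _ _ Ez.
have [k'' [gk qk]] := pb_ex pbR (u := k) (v := 0) ltac:(by rewrite qk0 c0r).
have Ez'' := T2 kcE icE e2oE Ez (ex_intro _ gR (And3 pbR gk qk)).
have [SB'' [y1 [y2 [y1' [y2' Hy]]]]] := Kb R1 R2.
have [SC'' [z1 [z2 [z1' [z2' Hz]]]]] := Kb C'' C''.
have [sqR _] := pbR.
have D1 : d1 ⊚ (b1' ⊚ r) = q.
  have <- : c1' ⊚ (dsum b1 b2 b1' b2' c1 c2 c1' c2' d1 d2 ⊚ r) = d1 ⊚ (b1' ⊚ r).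
    by rewrite /dsum; move: Hc => Hc'; bip Hc'; cdone.
  by rewrite eq2; move: Hc => Hc'; bip Hc'; cdone.
have D2 : d2 ⊚ (b2' ⊚ r) = q.
  have <- : c2' ⊚ (dsum b1 b2 b1' b2' c1 c2 c1' c2' d1 d2 ⊚ r) = d2 ⊚ (b2' ⊚ r).
    by rewrite /dsum; move: Hc => Hc'; bip Hc'; cdone.
  by rewrite eq2; move: Hc => Hc'; bip Hc'; cdone.
have [m1 [gm1 dm1]] := pb_ex pb1 (u := b1' ⊚ r ⊚ gR) (v := q'') ltac:(by rewrite -cA' D1 sqR).
have [m2 [gm2 dm2]] := pb_ex pb2 (u := b2' ⊚ r ⊚ gR) (v := q'') ltac:(by rewrite -cA' D2 sqR).
have [rho'' [grho drho]] := pb_ex pb (u := rho ⊚ gR) (v := q'')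
  ltac:(by rewrite -cA' eq4 cA' sqR /h -cA' -(cA' ga) ga2 c1l).
have mk1 : m1 ⊚ k'' = i1'' ⊚ a1'.
  apply: (pb_uniq pb1).
  - rewrite -cA' gm1 -cA' gi1 cA' gk cA' eq1 /dsum. move: Hb => Hb'; bip Hb'; cdone.
  - by rewrite -cA' dm1 qk -cA' di1'' c0l.
have mk2 : m2 ⊚ k'' = i2'' ⊚ a2'.
  apply: (pb_uniq pb2).
  - rewrite -cA' gm2 -cA' gi2 cA' gk cA' eq1 /dsum. move: Hb => Hb'; bip Hb'; cdone.
  - by rewrite -cA' dm2 qk -cA' di2'' c0l.
exists A, C'', SA, SB'', SC'', R'', R1, R2, i1'', d1'', i2'', d2'', a1, a2, a1', a2', y1, y2, y1', y2', z1, z2, z1', z2'.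
exists k'', q'', (y1 ⊚ m1 + y2 ⊚ m2), rho'', al, (idm C'').
split; [by split | by split | by split => //; split => //; exact: iso_id | ].
split.
- rewrite /dsum. mkRw mk1; mkRw mk2. move: Hy => Hy'; bip Hy'; cdone.
- rewrite /dsum. mkRw dm1; mkRw dm2. move: Hy Hz => Hy' Hz'; bip Hy'; bip Hz'; cdone.
- apply: (pb_uniq pb).
  + by rewrite -cA' grho cA' gk eq3 -!cA' gi.
  + by rewrite -cA' drho qk -!cA' di !c0l.
- by rewrite drho c1l.
Qed.

Lemma wD (B1 B2 SB C SC R : K) (b1 : HomC B1 SB) (b2 : HomC B2 SB) b1' b2' (c1 c2 : HomC C SC) c1' c2'
  (d1 : HomC B1 C) (d2 : HomC B2 C) (r : HomC R SB) (q : HomC R C) :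
  is_biproduct c1 c2 c1' c2' -> dsum b1 b2 b1' b2' c1 c2 c1' c2' d1 d2 ⊚ r = (c1 + c2) ⊚ q ->
  Rw (d1 ⊚ (b1' ⊚ r) = q) /\ Rw (d2 ⊚ (b2' ⊚ r) = q).
Proof.
move=> Hc e. split.
- have <- : c1' ⊚ (dsum b1 b2 b1' b2' c1 c2 c1' c2' d1 d2 ⊚ r) = d1 ⊚ (b1' ⊚ r).
    by rewrite /dsum; move: Hc => Hc'; bip Hc'; cdone.
  by rewrite e; move: Hc => Hc'; bip Hc'; cdone.
- have <- : c2' ⊚ (dsum b1 b2 b1' b2' c1 c2 c1' c2' d1 d2 ⊚ r) = d2 ⊚ (b2' ⊚ r).
    by rewrite /dsum; move: Hc => Hc'; bip Hc'; cdone.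
  by rewrite e; move: Hc => Hc'; bip Hc'; cdone.
Qed.

Lemma witness_dsum (Wa Wb : seqclass K) : is_additive K -> dsum_closed Emax ->
  weakly_exact Wa -> weakly_exact Wb ->
  forall (A B C A' B' C' : K) (i : HomC A B) (d : HomC B C) (i' : HomC A' B') (d' : HomC B' C'),
  witness Emax Wa Wb i d -> witness Emax Wa Wb i' d' ->
  forall (SA SB SC : K) (a1 : HomC A SA) (a2 : HomC A' SA) a1' a2' (b1 : HomC B SB) (b2 : HomC B' SB) b1' b2'
    (c1 : HomC C SC) (c2 : HomC C' SC) c1' c2',
  is_biproduct a1 a2 a1' a2' -> is_biproduct b1 b2 b1' b2' -> is_biproduct c1 c2 c1' c2' ->
  witness Emax Wa Wb (dsum a1 a2 a1' a2' b1 b2 b1' b2' i i') (dsum b1 b2 b1' b2' c1 c2 c1' c2' d d').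
Proof.
move=> [_ Kb] dsE [_ _ dsa _ _] [_ _ dsb _ _] A B C A' B' C' i d i' d' H0 H1 SA SB SC a1 a2 a1' a2' b1 b2 b1' b2' c1 c2 c1' c2' Ha Hb Hc.
move: H0 => [A0 [C0 [SA0 [SB0 [SC0 [R0 [B10 [B20 [i10 [d10 [i20 [d20 [a10 [a20 [a10' [a20' [b10 [b20 [b10' [b20' [c10 [c20 [c10' [c20' [k0 [q0 [r0 [rho0 [al0 [ga0 [[Wi10 Wi20] [Ha0 Hb0 Hc0] [Ez0 [ial0 iga0]] [eq10 eq20 eq30 eq40]]]]]]]]]]]]]]]]]]]]]]]]]]]]]]]].
move: H1 => [A1 [C1 [SA1 [SB1 [SC1 [R1 [B11 [B21 [i11 [d11 [i21 [d21 [a11 [a21 [a11' [a21' [b11 [b21 [b11' [b21' [c11 [c21 [c11' [c21' [k1 [q1 [r1 [rho1 [al1 [ga1 [[Wi11 Wi21] [Ha1 Hb1 Hc1] [Ez1 [ial1 iga1]] [eq11 eq21 eq31 eq41]]]]]]]]]]]]]]]]]]]]]]]]]]]]]]]].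
have [X0 [x1 [x2 [x1' [x2' Hx]]]]] := Kb A0 A1.
have [Y0 [w1 [w2 [w1' [w2' Hw]]]]] := Kb C0 C1.
have [E1 [f1 [f2 [f1' [f2' Hf]]]]] := Kb B10 B11.
have [E2 [g1 [g2 [g1' [g2' Hg]]]]] := Kb B20 B21.
have Wx1 := dsa _ _ _ _ _ _ _ _ _ _ Wi10 Wi11 _ _ _ _ _ _ _ _ _ _ _ _ _ _ _ Hx Hf Hw.
have Wx2 := dsb _ _ _ _ _ _ _ _ _ _ Wi20 Wi21 _ _ _ _ _ _ _ _ _ _ _ _ _ _ _ Hx Hg Hw.
have [U [u1 [u2 [u1' [u2' Hu]]]]] := Kb SA0 SA1.
have [V [v1 [v2 [v1' [v2' Hv]]]]] := Kb SB0 SB1.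
have [Wc [o1 [o2 [o1' [o2' Ho]]]]] := Kb SC0 SC1.
have [RR [rr1 [rr2 [rr1' [rr2' Hrr]]]]] := Kb R0 R1.
have Hya := bip_shuffle Hx Hx Ha0 Ha1 Hu.
have Hyb := bip_shuffle Hf Hg Hb0 Hb1 Hv.
have Hyc := bip_shuffle Hw Hw Hc0 Hc1 Ho.
have Ez := dsE _ _ _ _ _ _ _ _ _ _ Ez0 Ez1 _ _ _ _ _ _ _ _ _ _ _ _ _ _ _ Hu Hrr Hw.
exists X0, Y0, U, V, Wc, RR, E1, E2.
eexists; eexists; eexists; eexists.
do 12 eexists.
exists (dsum u1 u2 u1' u2' rr1 rr2 rr1' rr2' k0 k1), (dsum rr1 rr2 rr1' rr2' w1 w2 w1' w2' q0 q1).
exists (dsum rr1 rr2 rr1' rr2' v1 v2 v1' v2' r0 r1), (dsum rr1 rr2 rr1' rr2' b1 b2 b1' b2' rho0 rho1).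
exists (dsum x1 x2 x1' x2' a1 a2 a1' a2' al0 al1), (dsum w1 w2 w1' w2' c1 c2 c1' c2' ga0 ga1).
split.
- split; [exact: Wx1 | exact: Wx2].
- split; [exact: Hya | exact: Hyb | exact: Hyc].
- split; first exact: Ez.
  split; apply: dsum_iso => //.
split.
- rewrite dsum_comp // eq10 eq11. rewrite /dsum.
  move: Hx Hf Hg Hu Hv Hrr Ha0 Ha1 Hb0 Hb1 => Hx' Hf' Hg' Hu' Hv' Hrr' Ha0' Ha1' Hb0' Hb1'.
  bip Hx'; bip Hf'; bip Hg'; bip Hu'; bip Hv'; bip Hrr'; bip Ha0'; bip Ha1'; bip Hb0'; bip Hb1'.
  cdone.
- have [D10 D20] := wD Hc0 eq20. have [D11 D21] := wD Hc1 eq21.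
  rewrite /dsum.
  move: Hw Hf Hg Ho Hv Hrr Hb0 Hb1 Hc0 Hc1 => Hw' Hf' Hg' Ho' Hv' Hrr' Hb0' Hb1' Hc0' Hc1'.
  bip Hw'; bip Hf'; bip Hg'; bip Ho'; bip Hv'; bip Hrr'; bip Hb0'; bip Hb1'; bip Hc0'; bip Hc1'.
  cdone.
- rewrite dsum_comp // eq30 eq31. rewrite /dsum.
  move: Hx Ha Hb Hu Hrr Ha0 Ha1 => Hx' Ha' Hb' Hu' Hrr' Ha0' Ha1'.
  bip Hx'; bip Ha'; bip Hb'; bip Hu'; bip Hrr'; bip Ha0'; bip Ha1'.
  cdone.
- by rewrite !dsum_comp // eq40 eq41.
Qed.

End Wit.

Set Implicit Arguments. Unset Strict Implicit. Unset Printing Implicit Defensive.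
Import GRing.Theory.
Local Open Scope ring_scope.

Lemma sum_in_V (K : PreAdditive) (W1 W2 V : seqclass K) :
  weakly_exact V -> subclass W1 V -> subclass W2 V -> subclass (sum_class W1 W2) V.
Proof.
move=> [kcV icV dsV _ [e2V e2oV]] s1 s2 A' B' C' i' d'.
move=> [A [B1 [B2 [C [Q [i1 [d1 [i2 [d2 [iQ [dQ [Wi1 Wi2 baer isq]]]]]]]]]]]].
move: baer => [SA [SB [SC [a1 [a2 [a1' [a2' [b1 [b2 [b1' [b2' [c1 [c2 [c1' [c2' [Ha Hb Hc
  [P [j [e [pos pbs]]]]]]]]]]]]]]]]]]]].
have Veta := dsV _ _ _ _ _ _ _ _ _ _ (s1 _ _ _ _ _ Wi1) (s2 _ _ _ _ _ Wi2) _ _ _ _ _ _ _ _ _ _ _ _ _ _ _ Ha Hb Hc.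
have Vje := T1 kcV icV e2V Veta pos.
have VQ := T2 kcV icV e2oV Vje pbs.
exact: icV _ _ _ _ _ _ _ _ _ _ VQ isq.
Qed.

Theorem mainTheorem15 (K : PreAdditive) (Kadd : is_additive K)
    (Emax W1 W2 : seqclass K) :
  is_max_exact Emax ->
  weakly_exact W1 -> weakly_exact W2 ->
  subclass W1 Emax -> subclass W2 Emax ->
  weakly_exact (sum_class W1 W2) /\
  (forall (A B C : K) (i : HomC A B) (d : HomC B C),
      sum_class W1 W2 A B C i d <->
      (forall V : seqclass K, weakly_exact V -> subclass W1 V -> subclass W2 V ->
          V A B C i d)).
Proof.
move=> [exE _] w1 w2 s1 s2.
have [kcE icE [E0E E0oE] [e2E e2oE] _] := exE.
have dsE := exact_dsum Kadd exE.
have WS := W_to_S kcE icE e2E e2oE dsE s1 s2.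
have SW := S_to_W kcE icE e2oE dsE s1 s2.
have SE := S_in_E kcE icE e2E e2oE dsE s1 s2.
have sub1 : subclass W1 (sum_class W1 W2).
  move=> A B C i d Wi. apply: WS; last exact: kcE _ _ _ _ _ (s1 _ _ _ _ _ Wi).
  have HH := witness_split Kadd kcE dsE w2 s2 Wi (s1 _ _ _ _ _ Wi). exact HH.
have sub2 : subclass W2 (sum_class W1 W2).
  move=> A B C i d Wi. apply: WS; last exact: kcE _ _ _ _ _ (s2 _ _ _ _ _ Wi).
  apply: witness_swap.
  have HH := witness_split Kadd kcE dsE w1 s1 Wi (s2 _ _ _ _ _ Wi). exact HH.
have wS : weakly_exact (sum_class W1 W2).
  split.
  - move=> A B C i d Si. exact: kcE _ _ _ _ _ (SE _ _ _ _ _ Si).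
  - move=> A B C A' B' C' i d i' d' Si isq.
    apply: WS; last exact: kcE _ _ _ _ _ (icE _ _ _ _ _ _ _ _ _ _ (SE _ _ _ _ _ Si) isq).
    have HH := witness_iso (SW _ _ _ _ _ Si) isq. exact HH.
  - move=> A B C A' B' C' i d i' d' Si Si' SA SB SC a1 a2 a1' a2' b1 b2 b1' b2' c1 c2 c1' c2' Ha Hb Hc.
    apply: WS; last exact: kcE _ _ _ _ _ (dsE _ _ _ _ _ _ _ _ _ _ (SE _ _ _ _ _ Si) (SE _ _ _ _ _ Si') _ _ _ _ _ _ _ _ _ _ _ _ _ _ _ Ha Hb Hc).
    have HH := witness_dsum Kadd dsE w1 w2 (SW _ _ _ _ _ Si) (SW _ _ _ _ _ Si') Ha Hb Hc. exact HH.
  - have [_ _ _ [e01 e0o1] _] := w1. split.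
    + move=> A. have [C [d Wd]] := e01 A. by exists C, d; apply: sub1.
    + move=> C. have [A [i Wi]] := e0o1 C. by exists A, i; apply: sub1.
  - split.
    + move=> A B i [C [d Si]] A' f.
      have Ei := SE _ _ _ _ _ Si.
      have [Hex _] := e2E A B i (ex_intro _ C (ex_intro _ d Ei)) A' f.
      split => // P i' f' po.
      have [[di _] _] := kcE _ _ _ _ _ Ei.
      have [e [ef ej]] := po_ex po (u := d) (v := 0) ltac:(by rewrite di c0l).
      have Ee := T1 kcE icE e2E Ei (ex_intro _ f' (And3 po ef ej)).
      exists C, e. apply: WS; last exact: kcE _ _ _ _ _ Ee.
      have HH := witness_po Kadd kcE icE e2E w1 w2 (SW _ _ _ _ _ Si) po ef ej. exact HH.
    + move=> B C d [A [i Si]] C' g.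
      have Ei := SE _ _ _ _ _ Si.
      have [Hex _] := e2oE B C d (ex_intro _ A (ex_intro _ i Ei)) C' g.
      split => // Q d' g' pb.
      have [[di _] _] := kcE _ _ _ _ _ Ei.
      have [i' [gi di']] := pb_ex pb (u := i) (v := 0) ltac:(by rewrite di c0r).
      have Ee := T2 kcE icE e2oE Ei (ex_intro _ g' (And3 pb gi di')).
      exists A, i'. apply: WS; last exact: kcE _ _ _ _ _ Ee.
      have HH := witness_pb Kadd kcE icE e2oE w1 w2 (SW _ _ _ _ _ Si) pb gi di'. exact HH.
split => // A B C i d; split.
- move=> Si V wV v1 v2. exact: sum_in_V wV v1 v2 _ _ _ _ _ Si.
- move=> H. exact: H _ wS sub1 sub2.
Qed.
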